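(* Let $G=(V,E,s)$ be a flow graph with dominator tree $D$, let $(x,y)\in E$ with $x$ reachable from $s$, and let $G'$ be obtained from $G$ by deleting $(x,y)$, where $y$ becomes unreachable from $s$ in $G'$. If a vertex $v$ that is reachable in both $G$ and $G'$ is affected by the deletion, i.e., $d'(v)\neq d(v)$, then there is a path $P$ in $G$ from $y$ to $v$ such that $\mathit{depth}(d(v))<\mathit{depth}(w)$ for all vertices $w$ on $P$.
   Context: A flow graph $G=(V,E,s)$ is a directed graph with start vertex $s$; a vertex is reachable if there is a path from $s$ to it. For reachable vertices, $w$ dominates $v$ if every path from $s$ to $v$ contains $w$. The immediate dominator $d(v)$ of a reachable $v\neq s$ is the proper dominator of $v$ that is dominated by all other proper dominators of $v$. The dominator tree $D$ is the tree on the reachable vertices rooted at $s$ in which the parent of $v\neq s$ is $d(v)$; $\mathit{depth}(w)$ is the depth of $w$ in $D$ (the dominator tree of $G$, before the deletion). $d'(v)$ denotes the immediate dominator of $v$ in $G'$. *)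

(* Defs.v *)
From mathcomp Require Import all_boot.
Set Implicit Arguments. Unset Strict Implicit. Unset Printing Implicit Defensive.

Section FlowGraph.
Variables (V : finType) (E : rel V) (s : V).

Definition reachable (v : V) : Prop :=
  exists p : seq V, path E s p /\ last s p = v.

Definition dominates (w v : V) : Prop :=
  reachable w /\ reachable v /\
  forall p : seq V, path E s p -> last s p = v -> w \in s :: p.

Definition pdominates (w v : V) : Prop := dominates w v /\ w <> v.

Definition idom (v u : V) : Prop :=
  v <> s /\ pdominates u v /\ forall w, pdominates w v -> w <> u -> dominates w u.

(* depth in the dominator tree D (root s, parent of v <> s is d(v)) *)
Inductive depth : V -> nat -> Prop :=
  | depth_root : reachable s -> depth s 0
  | depth_step v u k : idom v u -> depth u k -> depth v k.+1.

End FlowGraph.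

Definition del_edge (V : finType) (E : rel V) (x y : V) : rel V :=
  [rel a b | E a b && ((a, b) != (x, y))].

(* Main.v *)
Require Import Defs.
From mathcomp Require Import all_boot zify.
From Stdlib Require Import Classical.
Set Implicit Arguments. Unset Strict Implicit. Unset Printing Implicit Defensive.

Lemma split_at (T : eqType) (x0 w : T) (p : seq T) :
  w \in x0 :: p -> exists p1 p2, p = p1 ++ p2 /\ last x0 p1 = w.
Proof.
elim: p x0 => [|a p IH] x0.
  by rewrite inE => /eqP ->; exists [::], [::].
rewrite inE => /orP [/eqP ->|H]; first by exists [::], (a :: p).
have [p1 [p2 [-> <-]]] := IH a H.
by exists (a :: p1), p2.
Qed.

Lemma split_last (T : eqType) (x0 w : T) (p : seq T) :
  w \in x0 :: p -> exists p1 p2, [/\ p = p1 ++ p2, last x0 p1 = w & w \notin p2].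
Proof.
elim: p x0 => [|a p IH] x0.
  by rewrite inE => /eqP ->; exists [::], [::].
move=> H.
case Hw: (w \in a :: p).
  have [p1 [p2 [-> <- H2]]] := IH a Hw.
  by exists (a :: p1), p2.
move: H; rewrite in_cons Hw orbF => /eqP Hx; subst x0.
exists [::], (a :: p); split => //; by rewrite Hw.
Qed.

Section Dom.
Variables (V : finType) (E : rel V) (s : V).

Lemma reach_prefix p w : path E s p -> w \in s :: p -> reachable E s w.
Proof.
move=> Hp /split_at [p1 [p2 [Hq Hl]]]; exists p1; split=> //.
by move: Hp; rewrite Hq cat_path => /andP [].
Qed.

Lemma dom_refl w : reachable E s w -> dominates E s w w.
Proof.
move=> Hw; split=> //; split=> // p _ <-; exact: mem_last.
Qed.

Lemma dom_trans a b c : dominates E s a b -> dominates E s b c -> dominates E s a c.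
Proof.
move=> [Ha [Hb Hab]] [_ [Hc Hbc]]; split=> //; split=> // p Hp Hl.
have [p1 [p2 [Hq Hl1]]] := split_at (Hbc p Hp Hl).
move: Hp; rewrite Hq cat_path => /andP [Hp1 _].
have := Hab p1 Hp1 Hl1.
by rewrite !inE mem_cat => /orP [->|->] //; rewrite orbT.
Qed.

Lemma dom_s_eq a : dominates E s a s -> a = s.
Proof. by move=> [_ [_ H]]; have := H [::] isT erefl; rewrite inE => /eqP. Qed.

Lemma dom_antisym a b : dominates E s a b -> dominates E s b a -> a = b.
Proof.
move=> Hab Hba; apply: NNPP => Hne.
have [_ [[p [Hp Hl]] Ha]] := Hba.
have [_ [_ Hb]] := Hab.
suff: forall n p, size p <= n -> path E s p -> last s p = a -> False.
  by move/(_ (size p) p (leqnn _) Hp Hl).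
elim=> [|n IH] q Hs Hq Hlq.
  case: q Hs Hq Hlq => // _ _ Hlq.
  have [_ [_ Hc]] := Hab.
  have := Ha [::] isT Hlq; rewrite inE => /eqP Hbs.
  by apply: Hne; rewrite -Hlq -Hbs.
have [q1 [q2 [Hqq Hl1]]] := split_at (Ha q Hq Hlq).
move: Hq; rewrite Hqq cat_path => /andP [Hq1 Hq2].
have [q3 [q4 [Hq34 Hl3]]] := split_at (Hb q1 Hq1 Hl1).
move: Hq1; rewrite Hq34 cat_path => /andP [Hq3 _].
case: q2 Hqq Hq2 => [|c q2] Hqq Hq2.
  by apply: Hne; rewrite -Hl1 -Hlq Hqq cats0.
apply: (IH q3) => //.
move: Hs; rewrite Hqq Hq34 !size_cat /=; lia.
Qed.
End Dom.

Section Dom2.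
Variables (V : finType) (E : rel V) (s : V).

Lemma dom_total a b w : dominates E s a w -> dominates E s b w ->
  dominates E s a b \/ dominates E s b a.
Proof.
move=> Haw Hbw.
have [Ha [Hw Ha']] := Haw. have [Hb [_ Hb']] := Hbw.
case: (classic (dominates E s b a)) => Hba; [by right|left].
have [R [HR HRl] Hnot] : exists R, [/\ path E s R, last s R = a & b \notin s :: R].
  apply: NNPP => Hn; apply: Hba; split=> //; split=> // R HR HRl.
  case Hin: (b \in s :: R) => //.
  by exfalso; apply: Hn; exists R; rewrite Hin.
split=> //; split=> // S HS HSl.
case Hin: (a \in s :: S) => //; exfalso.
have [q [Hq Hql]] := Hw.
have [q1 [q2 [Hqq Hl1 Hn2]]] := split_last (Ha' q Hq Hql).
move: Hq; rewrite Hqq cat_path => /andP [_ Hq2].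
rewrite Hl1 in Hq2.
have Hc : path E s (R ++ q2) by rewrite cat_path HR HRl Hq2.
have Hcl : last s (R ++ q2) = w by rewrite last_cat HRl -Hl1 -last_cat -Hqq Hql.
have := Hb' _ Hc Hcl.
rewrite -cat_cons mem_cat (negbTE Hnot) /= => Hbq2.
have Hbq2' : b \in a :: q2 by rewrite inE Hbq2 orbT.
have [q3 [q4 [Hq34 Hl3]]] := split_at Hbq2'.
move: Hq2; rewrite Hq34 cat_path => /andP [_ Hq4]. rewrite Hl3 in Hq4.
have Hd : path E s (S ++ q4) by rewrite cat_path HS HSl Hq4.
have Hdl : last s (S ++ q4) = w.
  by rewrite last_cat HSl -Hl3 -last_cat -Hq34 -Hl1 -last_cat -Hqq Hql.
have := Ha' _ Hd Hdl.
rewrite -cat_cons mem_cat Hin /=.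
by move: Hn2; rewrite Hq34 mem_cat negb_or => /andP [_ /negbTE ->].
Qed.

Lemma idom_chain w (l : seq V) u : u \in l -> pdominates E s u w ->
  exists m, [/\ m \in l, pdominates E s m w &
     forall z, z \in l -> pdominates E s z w -> dominates E s z m].
Proof.
elim: l u => [|a l IH] u //.
rewrite inE => Hu Hpu.
case: (classic (exists z, z \in l /\ pdominates E s z w)) => [[z [Hz Hpz]]|Hno].
  have [m [Hm Hpm Hall]] := IH z Hz Hpz.
  case: (classic (pdominates E s a w)) => Hpa.
    have [Ham|Hma] := dom_total Hpa.1 Hpm.1.
      exists m; split=> //; first by rewrite inE Hm orbT.
      by move=> z' ; rewrite inE => /orP [/eqP ->|] //; apply: Hall.
    exists a; split=> //; first by rewrite ?mem_head.
    move=> z'; rewrite inE => /orP [/eqP -> _|Hz' Hpz'].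
      by apply: dom_refl; exact: Hpa.1.1.
    exact: dom_trans (Hall z' Hz' Hpz') Hma.
  exists m; split=> //; first by rewrite inE Hm orbT.
  by move=> z'; rewrite inE => /orP [/eqP ->|] //; apply: Hall.
have Hua : u = a.
  case/orP: Hu => [/eqP //|Hu]; exfalso; apply: Hno; by exists u.
subst u.
exists a; split=> //.
move=> z'; rewrite inE => /orP [/eqP -> _|Hz' Hpz'].
  by apply: dom_refl; exact: Hpu.1.1.
by exfalso; apply: Hno; exists z'.
Qed.

Lemma reach_s : reachable E s s.
Proof. by exists [::]. Qed.

Lemma dom_s w : reachable E s w -> dominates E s s w.
Proof. by move=> Hw; split; [exact: reach_s|split=> // p _ _; rewrite inE eqxx]. Qed.

Lemma idom_ex w : reachable E s w -> w <> s -> exists u, idom E s w u.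
Proof.
move=> Hw Hws.
have Hps : pdominates E s s w by split; [exact: dom_s|move=> H; apply: Hws].
have [m [_ Hpm Hall]] := idom_chain (l := enum V) (mem_enum _ s) Hps.
exists m; split=> //; split=> // z Hz _; apply: Hall => //; exact: mem_enum.
Qed.

Lemma idom_uniq w u1 u2 : idom E s w u1 -> idom E s w u2 -> u1 = u2.
Proof.
move=> [_ [Hp1 H1]] [_ [Hp2 H2]].
case: (eqVneq u1 u2) => // Hne.
apply: dom_antisym; [apply: H2 => //; exact/eqP|apply: H1 => //].
by apply/eqP; rewrite eq_sym.
Qed.

Lemma depth_fun w k1 k2 : depth E s w k1 -> depth E s w k2 -> k1 = k2.
Proof.
move=> H; elim: H k2 => [_|v u k Hi Hd IH] k2 H2.
  by inversion H2 => //; case: H => Hss.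
inversion H2; subst.
  by case: Hi.
by rewrite (IH k0) // (idom_uniq Hi H).
Qed.

Lemma depth_ex w : reachable E s w -> exists k, depth E s w k.
Proof.
move=> [p [Hp Hl]].
suff H: forall n q w, size q <= n -> path E s q -> last s q = w -> exists k, depth E s w k.
  exact: (H _ p _ (leqnn _) Hp Hl).
elim=> [|n IH] q w' Hs Hq Hlq.
  case: q Hs Hq Hlq => // _ _ <-; exists 0; apply: depth_root; exact: reach_s.
case: (eqVneq w' s) => [->|Hws]; first by exists 0; apply: depth_root; exact: reach_s.
have [u Hu] := idom_ex (ex_intro _ q (conj Hq Hlq)) (fun e => (negP Hws) (introT eqP e)).
have Hud := Hu.2.1.1.2.2 q Hq Hlq.
have [q1 [q2 [Hqq Hl1]]] := split_at Hud.
move: Hq; rewrite Hqq cat_path => /andP [Hq1 _].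
case: q2 Hqq => [|c q2] Hqq.
  by exfalso; apply: Hu.2.1.2; rewrite -Hl1 -Hlq Hqq cats0.
have Hs1 : size q1 <= n by move: Hs; rewrite Hqq size_cat /=; lia.
have [k Hk] := IH q1 u Hs1 Hq1 Hl1.
by exists k.+1; apply: depth_step Hu Hk.
Qed.

Lemma depth_anc w k : depth E s w k -> forall a ka, pdominates E s a w -> depth E s a ka -> ka < k.
Proof.
elim=> [_|v u k0 Hi Hd IH] a ka Ha Hda.
  by case: Ha => Hd Hne; exfalso; apply: Hne; exact: dom_s_eq Hd.
case: (eqVneq a u) => [Hau|Hau].
  by subst a; rewrite (depth_fun Hda Hd).
have := IH a ka (conj (Hi.2.2 a Ha (fun e => (negP Hau) (introT eqP e))) (fun e => (negP Hau) (introT eqP e))) Hda; lia.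
Qed.
End Dom2.

Lemma del_sub (V : finType) (E : rel V) x y : subrel (del_edge E x y) E.
Proof. by move=> a b /andP []. Qed.

Lemma path_del (V : finType) (E : rel V) x y a p :
  path E a p -> y \notin p -> path (del_edge E x y) a p.
Proof.
elim: p a => [|b p IH] a //=.
rewrite inE negb_or => /andP [Hab Hp] /andP [Hyb Hyp].
rewrite IH // andbT /del_edge /= Hab /=.
apply/negP => /eqP [_ Hb]; by rewrite Hb eqxx in Hyb.
Qed.

Lemma reach_sub (V : finType) (E : rel V) x y s w :
  reachable (del_edge E x y) s w -> reachable E s w.
Proof. by move=> [p [Hp Hl]]; exists p; split=> //; exact: sub_path (@del_sub _ _ _ _) _ _ Hp. Qed.

Unset Implicit Arguments.
Theorem lemma5 (V : finType) (E : rel V) (s x y : V) :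
  E x y ->
  reachable E s x ->
  ~ reachable (del_edge E x y) s y ->
  forall v : V,
    reachable E s v ->
    reachable (del_edge E x y) s v ->
    forall dv dv' : V,
      idom E s v dv ->
      idom (del_edge E x y) s v dv' ->
      dv' <> dv ->
      exists p : seq V,
        [/\ path E y p, last y p = v &
            exists kd : nat, depth E s dv kd /\
              forall w, w \in y :: p -> exists k, depth E s w k /\ kd < k].
Proof.
move=> Exy Hx Hy v Hv Hv' dv dv' Hi Hi' Hne.
set E' := del_edge E x y.
have sub : forall a p, path E' a p -> path E a p.
  by move=> a p; apply: sub_path; exact: del_sub.
have [_ [[Hdv Hdvne] _]] := Hi.
have [_ [[Hdv' Hdv'ne] Hall']] := Hi'.
have Hdvr' : reachable E' s dv.
  have [p [Hp Hl]] := Hv'.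
  exact: reach_prefix Hp (Hdv.2.2 p (sub _ _ Hp) Hl).
have Hdvd' : dominates E' s dv v.
  split=> //; split=> // p Hp Hl; exact: Hdv.2.2 p (sub _ _ Hp) Hl.
have Hdd' : dominates E' s dv dv'.
  by apply: Hall' => //; move=> H; apply: Hne; rewrite H.
have Hdv'r' : reachable E' s dv' := Hdv'.1.
have [q [Hq Hql Hqn]] : exists q, [/\ path E s q, last s q = v & dv' \notin s :: q].
  apply: NNPP => Hn.
  have Hd'v : dominates E s dv' v.
    split; first exact: reach_sub Hdv'r'.
    split=> // p Hp Hl; case Hin: (dv' \in s :: p) => //.
    by exfalso; apply: Hn; exists p; rewrite Hin.
  have Hd'd : dominates E s dv' dv by apply: Hi.2.2 => //; split.
  have Hd'd' : dominates E' s dv' dv.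
    split=> //; split=> // p Hp Hl; exact: Hd'd.2.2 p (sub _ _ Hp) Hl.
  by apply: Hne; apply: dom_antisym Hd'd' Hdd'.
have Hyq : y \in q.
  case Hin: (y \in q) => //.
  have Hq' : path E' s q := path_del x Hq (negbT Hin).
  by move: Hqn; rewrite (Hdv'.2.2 q Hq' Hql).
have Hyqs : y \in s :: q by rewrite inE Hyq orbT.
have [q1 [q2 [Hqq Hl1 Hyn]]] := split_last (x0 := s) (p := q) (w := y) Hyqs.
have := Hq; rewrite Hqq cat_path => /andP [_ Hq2]; rewrite Hl1 in Hq2.
have Hq2l : last y q2 = v by rewrite -Hl1 -last_cat -Hqq.
have Hq2' : path E' y q2 := path_del x Hq2 Hyn.
have Hsub : forall w, w \in y :: q2 -> w \in s :: q.
  move=> w; rewrite inE => /orP [/eqP ->|Hw].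
    have := mem_last s q1; rewrite Hl1 => H.
    by rewrite Hqq -cat_cons mem_cat H.
  by rewrite Hqq inE mem_cat Hw !orbT.
have Hr2 : forall r1 r2, q2 = r1 ++ r2 -> forall z, z \in r2 -> z \in y :: q2.
  by move=> r1 r2 -> z Hz; rewrite inE mem_cat Hz !orbT.
have Hdvn : dv \notin y :: q2.
  apply/negP => Hin.
  have [r1 [r2 [Hrr Hlr]]] := split_at Hin.
  have := Hq2'; rewrite Hrr cat_path Hlr => /andP [_ Hpr2].
  have [t [Ht Htl Htn]] : exists t, [/\ path E' s t, last s t = dv & dv' \notin s :: t].
    apply: NNPP => Hn.
    have Hd'd' : dominates E' s dv' dv.
      split=> //; split=> // p Hp Hl; case Hin': (dv' \in s :: p) => //.
      by exfalso; apply: Hn; exists p; rewrite Hin'.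
    by apply: Hne; apply: dom_antisym Hd'd' Hdd'.
  have Hc : path E' s (t ++ r2) by rewrite cat_path Ht Htl.
  have Hcl : last s (t ++ r2) = v by rewrite last_cat Htl -Hlr -last_cat -Hrr.
  have := Hdv'.2.2 _ Hc Hcl.
  rewrite -cat_cons mem_cat (negbTE Htn) /= => Hd2.
  by move: Hqn; rewrite (Hsub _ (Hr2 _ _ Hrr _ Hd2)).
have [kd Hkd] := depth_ex Hdv.1.
exists q2; split=> //; exists kd; split=> // w Hw.
have Hwr : reachable E s w := reach_prefix Hq (Hsub w Hw).
have Hpw : pdominates E s dv w.
  split; last by move=> Heq; move: Hdvn; rewrite Heq Hw.
  split; first exact: Hdv.1.
  split=> // R HR HRl; case HinR: (dv \in s :: R) => //; exfalso.
  have [r1 [r2 [Hrr Hlr]]] := split_at Hw.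
  have := Hq2; rewrite Hrr cat_path Hlr => /andP [_ Hpr2].
  have Hc : path E s (R ++ r2) by rewrite cat_path HR HRl.
  have Hcl : last s (R ++ r2) = v by rewrite last_cat HRl -Hlr -last_cat -Hrr.
  have := Hdv.2.2 _ Hc Hcl.
  rewrite -cat_cons mem_cat HinR /= => Hd2.
  by move: Hdvn; rewrite (Hr2 _ _ Hrr _ Hd2).
have [k Hk] := depth_ex Hwr.
exists k; split=> //; have := depth_anc Hk Hpw Hkd; apply.
Qed.
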